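(* In the calculus $\lambda^{RE}$ described in the context, parallel reduction is a backward simulation: if $e_1\Rrightarrow e_2$ and $e_2\to e_2'$, then there exists $e_1'$ such that $e_1\to^*e_1'$ and $e_1'\Rrightarrow e_2'$.
   Context: Syntax of $\lambda^{RE}$. Basic types $b ::= \mathsf{Bool}\mid\mathsf{Unit}$. Constants $c ::= \mathsf{true}\mid\mathsf{false}\mid\mathsf{unit}\mid (=_b)\mid (=_{(c,b)})$. Expressions $e ::= c\mid x\mid e\ e\mid \lambda x{:}\tau.\,e\mid \mathsf{BEq}_b\ e\ e\ e\mid \mathsf{XEq}_{x:\tau\to\tau}\ e\ e\ e$. Values $v ::= c\mid \lambda x{:}\tau.\,e\mid \mathsf{BEq}_b\ e\ e\ v\mid \mathsf{XEq}_{x:\tau\to\tau}\ e\ e\ v$. Types $\tau ::= \{x{:}b\mid e\}\mid x{:}\tau\to\tau\mid \mathsf{PEq}_{\tau}\{e\}\{e\}$. $e[x:=e']$ is capture-avoiding substitution. Reduction: evaluation contexts $E ::= \bullet\mid E\ e\mid v\ E\mid \mathsf{BEq}_b\ e\ e\ E\mid\mathsf{XEq}_{x:\tau\to\tau}\ e\ e\ E$; $E[e]\to E[e']$ if $e\to e'$; $(\lambda x{:}\tau.\,e)\ v\to e[x:=v]$; $(=_b)\ c_1\to(=_{(c_1,b)})$; $(=_{(c_1,b)})\ c_2\to\mathsf{true}$ if $c_1,c_2$ syntactically equal, else $\to\mathsf{false}$. $\to^*$ is the reflexive–transitive closure. Parallel reduction $e\Rrightarrow e'$ and $\tau\Rrightarrow\tau'$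 is defined inductively: $x\Rrightarrow x$; $c\Rrightarrow c$; $\lambda x{:}\tau.e\Rrightarrow\lambda x{:}\tau'.e'$ if $\tau\Rrightarrow\tau'$, $e\Rrightarrow e'$; $e_1\ e_2\Rrightarrow e_1'\ e_2'$ if $e_i\Rrightarrow e_i'$; $(\lambda x{:}\tau.e)\ v\Rrightarrow e'[x:=v']$ if $e\Rrightarrow e'$ and $v\Rrightarrow v'$; $(=_b)\ c_1\Rrightarrow(=_{(c_1,b)})$; $(=_{(c_1,b)})\ c_2\Rrightarrow d$ where $d=\mathsf{true}$ if $c_1,c_2$ are syntactically equal and $\mathsf{false}$ otherwise; $\mathsf{BEq}_b\ e_l\ e_r\ e\Rrightarrow\mathsf{BEq}_b\ e_l'\ e_r'\ e'$ if $e_l\Rrightarrow e_l'$, $e_r\Rrightarrow e_r'$, $e\Rrightarrow e'$; $\mathsf{XEq}_{x:\tau_x\to\tau}\ e_l\ e_r\ e\Rrightarrow\mathsf{XEq}_{x:\tau_x'\to\tau'}\ e_l'\ e_r'\ e'$ if all five components parallel reduce; on types: $\{x{:}b\mid r\}\Rrightarrow\{x{:}b\mid r'\}$ if $r\Rrightarrow r'$; $x{:}\tau_x\to\tau\Rrightarrow x{:}\tau_x'\to\tau'$ if $\tau_x\Rrightarrow\tau_x'$, $\tau\Rrightarrow\tau'$; $\mathsf{PEq}_\tau\{e_l\}\{e_r\}\Rrightarrow\mathsf{PEq}_{\tau'}\{e_l'\}\{e_r'\}$ if all components parallel reduce. *)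

(* Defs.v *)
From Stdlib Require Import Arith Relations.

Inductive basety : Type := TBool | TUnit.

Inductive const : Type :=
| CTrue
| CFalse
| CUnit
| CEqB (b : basety)
| CEqC (c : const) (b : basety).

(* Binders: Lam binds var 0 in its body (not in the annotation);
   TRef b r binds var 0 in r; TArr tx t binds var 0 in t;
   XEq tx t el er e binds var 0 in t (the codomain of x:tx -> t). *)
Inductive expr : Type :=
| Const (c : const)
| Var (n : nat)
| App (e1 e2 : expr)
| Lam (t : ty) (e : expr)
| BEq (b : basety) (el er e : expr)
| XEq (tx t : ty) (el er e : expr)
with ty : Type :=
| TRef (b : basety) (r : expr)
| TArr (tx t : ty)
| TPEq (t : ty) (el er : expr).

Fixpoint shift_e (d k : nat) (e : expr) : expr :=
  match e with
  | Const c => Const c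
  | Var n => if Nat.ltb n k then Var n else Var (n + d)
  | App e1 e2 => App (shift_e d k e1) (shift_e d k e2)
  | Lam t e => Lam (shift_t d k t) (shift_e d (S k) e)
  | BEq b el er e => BEq b (shift_e d k el) (shift_e d k er) (shift_e d k e)
  | XEq tx t el er e =>
      XEq (shift_t d k tx) (shift_t d (S k) t)
          (shift_e d k el) (shift_e d k er) (shift_e d k e)
  end
with shift_t (d k : nat) (t : ty) : ty :=
  match t with
  | TRef b r => TRef b (shift_e d (S k) r)
  | TArr tx t => TArr (shift_t d k tx) (shift_t d (S k) t)
  | TPEq t el er => TPEq (shift_t d k t) (shift_e d k el) (shift_e d k er)
  end.

Fixpoint subst_e (j : nat) (s : expr) (e : expr) : expr :=
  match e with
  | Const c => Const c
  | Var n =>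
      if Nat.ltb n j then Var n
      else if Nat.eqb n j then shift_e j 0 s
      else Var (pred n)
  | App e1 e2 => App (subst_e j s e1) (subst_e j s e2)
  | Lam t e => Lam (subst_t j s t) (subst_e (S j) s e)
  | BEq b el er e => BEq b (subst_e j s el) (subst_e j s er) (subst_e j s e)
  | XEq tx t el er e =>
      XEq (subst_t j s tx) (subst_t (S j) s t)
          (subst_e j s el) (subst_e j s er) (subst_e j s e)
  end
with subst_t (j : nat) (s : expr) (t : ty) : ty :=
  match t with
  | TRef b r => TRef b (subst_e (S j) s r)
  | TArr tx t => TArr (subst_t j s tx) (subst_t (S j) s t)
  | TPEq t el er => TPEq (subst_t j s t) (subst_e j s el) (subst_e j s er)
  end.

Definition subst0 (e v : expr) : expr := subst_e 0 v e.

Inductive value : expr -> Prop :=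
| V_Const c : value (Const c)
| V_Lam t e : value (Lam t e)
| V_BEq b el er v : value v -> value (BEq b el er v)
| V_XEq tx t el er v : value v -> value (XEq tx t el er v).

Inductive step : expr -> expr -> Prop :=
| S_AppL e1 e1' e2 : step e1 e1' -> step (App e1 e2) (App e1' e2)
| S_AppR v e2 e2' : value v -> step e2 e2' -> step (App v e2) (App v e2')
| S_BEq b el er e e' : step e e' -> step (BEq b el er e) (BEq b el er e')
| S_XEq tx t el er e e' : step e e' -> step (XEq tx t el er e) (XEq tx t el er e')
| S_Beta t e v : value v -> step (App (Lam t e) v) (subst0 e v)
| S_EqB b c1 : step (App (Const (CEqB b)) (Const c1)) (Const (CEqC c1 b))
| S_EqTrue b c1 c2 : c1 = c2 ->
    step (App (Const (CEqC c1 b)) (Const c2)) (Const CTrue)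
| S_EqFalse b c1 c2 : c1 <> c2 ->
    step (App (Const (CEqC c1 b)) (Const c2)) (Const CFalse).

Definition steps : expr -> expr -> Prop := clos_refl_trans expr step.

Inductive par : expr -> expr -> Prop :=
| P_Var n : par (Var n) (Var n)
| P_Const c : par (Const c) (Const c)
| P_Lam t t' e e' : par_t t t' -> par e e' -> par (Lam t e) (Lam t' e')
| P_App e1 e1' e2 e2' : par e1 e1' -> par e2 e2' -> par (App e1 e2) (App e1' e2')
| P_Beta t e e' v v' : value v -> par e e' -> par v v' ->
    par (App (Lam t e) v) (subst0 e' v')
| P_EqB b c1 : par (App (Const (CEqB b)) (Const c1)) (Const (CEqC c1 b))
| P_EqTrue b c1 c2 : c1 = c2 ->
    par (App (Const (CEqC c1 b)) (Const c2)) (Const CTrue)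
| P_EqFalse b c1 c2 : c1 <> c2 ->
    par (App (Const (CEqC c1 b)) (Const c2)) (Const CFalse)
| P_BEq b el el' er er' e e' : par el el' -> par er er' -> par e e' ->
    par (BEq b el er e) (BEq b el' er' e')
| P_XEq tx tx' t t' el el' er er' e e' :
    par_t tx tx' -> par_t t t' -> par el el' -> par er er' -> par e e' ->
    par (XEq tx t el er e) (XEq tx' t' el' er' e')
with par_t : ty -> ty -> Prop :=
| PT_Ref b r r' : par r r' -> par_t (TRef b r) (TRef b r')
| PT_Arr tx tx' t t' : par_t tx tx' -> par_t t t' -> par_t (TArr tx t) (TArr tx' t')
| PT_PEq t t' el el' er er' : par_t t t' -> par el el' -> par er er' ->
    par_t (TPEq t el er) (TPEq t' el' er').

(* Main.v *)
Require Import Defs.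
From Stdlib Require Import Arith Relations Lia.

Scheme expr_ind' := Induction for expr Sort Prop
  with ty_ind' := Induction for ty Sort Prop.
Combined Scheme expr_ty_mut from expr_ind', ty_ind'.

Ltac nat_cases := repeat (simpl; match goal with
 | |- context [Nat.ltb ?a ?b] => destruct (Nat.ltb_spec a b)
 | |- context [Nat.eqb ?a ?b] => destruct (Nat.eqb_spec a b)
 end); try (exfalso; lia); try (f_equal; lia).

Ltac bind_cases := simpl; f_equal; match goal with H : _ |- _ => apply H; lia end.

Lemma shift_merge :
  (forall e k c d d', k <= c -> c <= k + d' -> shift_e d c (shift_e d' k e) = shift_e (d + d') k e) /\
  (forall t k c d d', k <= c -> c <= k + d' -> shift_t d c (shift_t d' k t) = shift_t (d + d') k t).
Proof.
  apply expr_ty_mut; intros; try solve [simpl; f_equal; auto];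
  try solve [simpl; f_equal; try apply H; try apply H0; try apply H1; try apply H2; try apply H3; lia].
  nat_cases.
Qed.

Lemma shift_comm :
  (forall e k' c d k, shift_e d (k' + c + k) (shift_e c k' e) = shift_e c k' (shift_e d (k' + k) e)) /\
  (forall t k' c d k, shift_t d (k' + c + k) (shift_t c k' t) = shift_t c k' (shift_t d (k' + k) t)).
Proof.
  apply expr_ty_mut; intros; try solve [simpl; f_equal; auto;
    try apply (H (S k')); try apply (H0 (S k')); try apply (H1 (S k'))].
  nat_cases.
Qed.
Lemma subst_gap :
  (forall e c j m s, c <= j -> j <= c + m -> subst_e j s (shift_e (S m) c e) = shift_e m c e) /\
  (forall t c j m s, c <= j -> j <= c + m -> subst_t j s (shift_t (S m) c t) = shift_t m c t).
Proof.
  apply expr_ty_mut; intros; try solve [simpl; f_equal; auto];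
  try solve [simpl; f_equal; try apply H; try apply H0; try apply H1; try apply H2; try apply H3; lia].
  nat_cases.
Qed.

Lemma subst_shift_comm :
  (forall w c i j v, subst_e (c + i + j) v (shift_e i c w) = shift_e i c (subst_e (c + j) v w)) /\
  (forall t c i j v, subst_t (c + i + j) v (shift_t i c t) = shift_t i c (subst_t (c + j) v t)).
Proof.
  apply expr_ty_mut; intros; try solve [simpl; f_equal; auto;
    try apply (H (S c)); try apply (H0 (S c)); try apply (H1 (S c))].
  nat_cases.
  rewrite (proj1 shift_merge); try lia. f_equal; lia.
Qed.

Lemma subst_subst :
  (forall a i j v w, subst_e (i + j) v (subst_e i w a) = subst_e i (subst_e j v w) (subst_e (S (i + j)) v a)) /\
  (forall a i j v w, subst_t (i + j) v (subst_t i w a) = subst_t i (subst_e j v w) (subst_t (S (i + j)) v a)).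
Proof.
  apply expr_ty_mut; intros; try solve [simpl; f_equal; auto;
    try apply (H (S i)); try apply (H0 (S i)); try apply (H1 (S i))].
  nat_cases.
  - subst. apply (proj1 subst_shift_comm w 0 i j v).
  - replace n with (S (i + j)) by lia. rewrite (proj1 subst_gap); try lia. f_equal; lia.
Qed.

Lemma shift_subst :
  (forall a c k d w, shift_e d (c + k) (subst_e c w a) = subst_e c (shift_e d k w) (shift_e d (S (c + k)) a)) /\
  (forall a c k d w, shift_t d (c + k) (subst_t c w a) = subst_t c (shift_e d k w) (shift_t d (S (c + k)) a)).
Proof.
  apply expr_ty_mut; intros; try solve [simpl; f_equal; auto;
    try apply (H (S c)); try apply (H0 (S c)); try apply (H1 (S c))].
  nat_cases.
  subst. apply (proj1 shift_comm w 0 c d k).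
Qed.
Inductive par2 : expr -> expr -> Prop :=
| Q_Var n : par2 (Var n) (Var n)
| Q_Const c : par2 (Const c) (Const c)
| Q_Lam t t' e e' : par2_t t t' -> par2 e e' -> par2 (Lam t e) (Lam t' e')
| Q_App e1 e1' e2 e2' : par2 e1 e1' -> par2 e2 e2' -> par2 (App e1 e2) (App e1' e2')
| Q_Beta t e e' v v' : value v -> par2 e e' -> par2 v v' ->
    par2 (subst0 e v) (subst0 e' v') ->
    par2 (App (Lam t e) v) (subst0 e' v')
| Q_EqB b c1 : par2 (App (Const (CEqB b)) (Const c1)) (Const (CEqC c1 b))
| Q_EqTrue b c1 c2 : c1 = c2 ->
    par2 (App (Const (CEqC c1 b)) (Const c2)) (Const CTrue)
| Q_EqFalse b c1 c2 : c1 <> c2 ->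
    par2 (App (Const (CEqC c1 b)) (Const c2)) (Const CFalse)
| Q_BEq b el el' er er' e e' : par2 el el' -> par2 er er' -> par2 e e' ->
    par2 (BEq b el er e) (BEq b el' er' e')
| Q_XEq tx tx' t t' el el' er er' e e' :
    par2_t tx tx' -> par2_t t t' -> par2 el el' -> par2 er er' -> par2 e e' ->
    par2 (XEq tx t el er e) (XEq tx' t' el' er' e')
with par2_t : ty -> ty -> Prop :=
| QT_Ref b r r' : par2 r r' -> par2_t (TRef b r) (TRef b r')
| QT_Arr tx tx' t t' : par2_t tx tx' -> par2_t t t' -> par2_t (TArr tx t) (TArr tx' t')
| QT_PEq t t' el el' er er' : par2_t t t' -> par2 el el' -> par2 er er' ->
    par2_t (TPEq t el er) (TPEq t' el' er').

Scheme par2_ind' := Induction for par2 Sort Prop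
  with par2_t_ind' := Induction for par2_t Sort Prop.
Combined Scheme par2_mut from par2_ind', par2_t_ind'.
Scheme par_ind' := Induction for par Sort Prop
  with par_t_ind' := Induction for par_t Sort Prop.
Combined Scheme par_mut from par_ind', par_t_ind'.

Lemma value_shift : forall v, value v -> forall d k, value (shift_e d k v).
Proof. induction 1; intros; simpl; constructor; auto. Qed.

Lemma value_subst : forall v, value v -> forall j s, value (subst_e j s v).
Proof. induction 1; intros; simpl; constructor; auto. Qed.

Lemma par2_shift :
  (forall e e', par2 e e' -> forall d k, par2 (shift_e d k e) (shift_e d k e')) /\
  (forall t t', par2_t t t' -> forall d k, par2_t (shift_t d k t) (shift_t d k t')).
Proof.
  apply par2_mut; intros; simpl; try solve [constructor; auto].
  - destruct (Nat.ltb n k); constructor.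
  - unfold subst0 in *.
    pose proof (proj1 shift_subst e' 0 k d v') as E1. cbn [Nat.add] in E1.
    pose proof (proj1 shift_subst e 0 k d v) as E2. cbn [Nat.add] in E2.
    rewrite E1.
    constructor; auto using value_shift. unfold subst0.
    rewrite <- E1, <- E2. auto.
Qed.

Lemma par2_subst :
  (forall e e', par2 e e' -> forall v v' j, par2 v v' -> par2 (subst_e j v e) (subst_e j v' e')) /\
  (forall t t', par2_t t t' -> forall v v' j, par2 v v' -> par2_t (subst_t j v t) (subst_t j v' t')).
Proof.
  apply par2_mut; intros; simpl; try solve [constructor; auto].
  - destruct (Nat.ltb n j); [constructor|].
    destruct (Nat.eqb n j); [apply (proj1 par2_shift); auto | constructor].
  - unfold subst0 in *.
    pose proof (proj1 subst_subst e' 0 j v'0 v') as E1. cbn [Nat.add] in E1.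
    pose proof (proj1 subst_subst e 0 j v1 v) as E2. cbn [Nat.add] in E2.
    rewrite E1.
    constructor; auto using value_subst. unfold subst0.
    rewrite <- E1, <- E2. auto.
Qed.

Lemma par_par2 :
  (forall e e', par e e' -> par2 e e') /\ (forall t t', par_t t t' -> par2_t t t').
Proof.
  apply par_mut; intros; try solve [constructor; auto].
  constructor; auto. apply (proj1 par2_subst); auto.
Qed.

Lemma par2_par :
  (forall e e', par2 e e' -> par e e') /\ (forall t t', par2_t t t' -> par_t t t').
Proof.
  apply par2_mut; intros; try solve [constructor; auto].
Qed.
Lemma steps_appL : forall a a' b, steps a a' -> steps (App a b) (App a' b).
Proof. induction 1; [apply rt_step; constructor; auto | apply rt_refl | eapply rt_trans; eauto]. Qed.
Lemma steps_appR : forall a b b', value a -> steps b b' -> steps (App a b) (App a b').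
Proof. induction 2; [apply rt_step; constructor; auto | apply rt_refl | eapply rt_trans; eauto]. Qed.
Lemma steps_beq : forall b el er e e', steps e e' -> steps (BEq b el er e) (BEq b el er e').
Proof. induction 1; [apply rt_step; constructor; auto | apply rt_refl | eapply rt_trans; eauto]. Qed.
Lemma steps_xeq : forall tx t el er e e', steps e e' -> steps (XEq tx t el er e) (XEq tx t el er e').
Proof. induction 1; [apply rt_step; constructor; auto | apply rt_refl | eapply rt_trans; eauto]. Qed.

Lemma to_value : forall e v, par2 e v -> value v ->
  exists v1, value v1 /\ steps e v1 /\ par2 v1 v.
Proof.
  induction 1; intros Hv; try solve [inversion Hv].
  - exists (Const c); repeat split; [constructor | apply rt_refl | constructor].
  - exists (Lam t e); repeat split; [constructor | apply rt_refl | constructor; auto].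
  - match goal with IH : value _ -> _ |- _ => destruct (IH Hv) as [v1 [A [B C]]] end; try (exists v1; repeat split; auto).
    all: idtac.
    eapply rt_trans; [apply rt_step; constructor; auto | exact B].
  - exists (Const (CEqC c1 b)); repeat split; [constructor | apply rt_step; constructor | constructor].
  - exists (Const CTrue); repeat split; [constructor | apply rt_step; constructor; auto | constructor].
  - exists (Const CFalse); repeat split; [constructor | apply rt_step; constructor; auto | constructor].
  - inversion Hv; subst. match goal with IH : value ?x -> _, H : value ?x |- _ => destruct (IH H) as [v1 [A [B C]]] end.
    exists (BEq b el er v1); repeat split; [constructor; auto | apply steps_beq; auto | constructor; auto].
  - inversion Hv; subst. match goal with IH : value ?x -> _, H : value ?x |- _ => destruct (IH H) as [v1 [A [B C]]] end.
    exists (XEq tx t el er v1); repeat split; [constructor; auto | apply steps_xeq; auto | constructor; auto].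
Qed.

Lemma val_const : forall x c, value x -> par2 x (Const c) -> x = Const c.
Proof. intros x c Hv H; inversion H; subst; auto; inversion Hv. Qed.

Lemma val_lam : forall x t e, value x -> par2 x (Lam t e) ->
  exists t0 e0, x = Lam t0 e0 /\ par2 e0 e.
Proof. intros x t e Hv H; inversion H; subst; eauto; inversion Hv. Qed.

Lemma main : forall e1 e2, par2 e1 e2 -> forall e2', step e2 e2' ->
  exists e1', steps e1 e1' /\ par2 e1' e2'.
Proof.
  induction 1; intros e2'' Hs; try solve [inversion Hs].
  - inversion Hs; subst.
    + edestruct IHpar2_1 as [x [A B]]; [eassumption|]. exists (App x e2); split;
        [apply steps_appL; auto | constructor; auto].
    + match goal with Hv : value e1' |- _ => destruct (to_value _ _ H Hv) as [a1 [A0 [B0 C0]]] end.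
      edestruct IHpar2_2 as [x [D E]]; [eassumption|]. exists (App a1 x); split;
        [eapply rt_trans; [apply steps_appL; exact B0 | apply steps_appR; eauto] | constructor; auto].
    + destruct (to_value _ _ H (V_Lam t e)) as [a1 [A [B C]]].
      destruct (val_lam _ _ _ A C) as [t0 [e0 [-> F]]].
      match goal with Hv : value e2' |- _ => destruct (to_value _ _ H0 Hv) as [b1 [A' [B' C']]] end.
      exists (subst0 e0 b1); split.
      * eapply rt_trans; [apply steps_appL; eauto|].
        eapply rt_trans; [apply steps_appR; [constructor|eauto]|].
        apply rt_step; constructor; auto.
      * apply (proj1 par2_subst); auto.
    + destruct (to_value _ _ H (V_Const _)) as [a1 [A [B C]]].
      apply val_const in C; auto; subst.
      destruct (to_value _ _ H0 (V_Const _)) as [b1 [A' [B' C']]].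
      apply val_const in C'; auto; subst.
      exists (Const (CEqC c1 b)); split; [|constructor].
      eapply rt_trans; [apply steps_appL; eauto|].
      eapply rt_trans; [apply steps_appR; [constructor|eauto]|].
      apply rt_step; constructor; auto.
    + destruct (to_value _ _ H (V_Const _)) as [a1 [A [B C]]].
      apply val_const in C; auto; subst.
      destruct (to_value _ _ H0 (V_Const _)) as [b1 [A' [B' C']]].
      apply val_const in C'; auto; subst.
      exists (Const CTrue); split; [|constructor].
      eapply rt_trans; [apply steps_appL; eauto|].
      eapply rt_trans; [apply steps_appR; [constructor|eauto]|].
      apply rt_step; constructor; auto.
    + destruct (to_value _ _ H (V_Const _)) as [a1 [A [B C]]].
      apply val_const in C; auto; subst.
      destruct (to_value _ _ H0 (V_Const _)) as [b1 [A' [B' C']]].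
      apply val_const in C'; auto; subst.
      exists (Const CFalse); split; [|constructor].
      eapply rt_trans; [apply steps_appL; eauto|].
      eapply rt_trans; [apply steps_appR; [constructor|eauto]|].
      apply rt_step; constructor; auto.
  - match goal with IH : forall _, step _ _ -> _ |- _ => destruct (IH _ Hs) as [x [A B]] end. exists x; split; auto.
    eapply rt_trans; [apply rt_step; constructor; auto | exact A].
  - inversion Hs; subst. edestruct IHpar2_3 as [x [A B]]; [eassumption|].
    exists (BEq b el er x); split; [apply steps_beq; auto | constructor; auto].
  - inversion Hs; subst. edestruct IHpar2_3 as [x [A B]]; [eassumption|].
    exists (XEq tx t el er x); split; [apply steps_xeq; auto | constructor; auto].
Qed.

Theorem corollaryC15 : forall e1 e2 e2' : expr,
  par e1 e2 -> step e2 e2' ->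
  exists e1', steps e1 e1' /\ par e1' e2'.
Proof.
  intros e1 e2 e2' H Hs.
  destruct (main _ _ (proj1 par_par2 _ _ H) _ Hs) as [x [A B]].
  exists x; split; auto. apply (proj1 par2_par); auto.
Qed.
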